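(* Let $\Sigma$ be a theory and let $A,B \subseteq \mathcal{T}_Y$ be finite. Then the following are equivalent: (1) $\Sigma \cup \{\emptyset \Rightarrow A\} \vdash \emptyset \Rightarrow B$; (2) there are $i_1,\ldots,i_n \in \mathbb{Z}$ such that $\Sigma \vdash \bigcup_{m=1}^n (A+i_m) \Rightarrow B$.
   Context: $Y$ is a non-empty finite set of attributes and $\mathcal{T}_Y = \{y^i \mid y \in Y, i \in \mathbb{Z}\}$; $M + j = \{y^{i+j} \mid y^i \in M\}$. A formula is $A \Rightarrow B$ with $A,B$ finite subsets of $\mathcal{T}_Y$; a theory is a set of formulas. Deduction rules (for arbitrary finite $A,B,C,D \subseteq \mathcal{T}_Y$, $i \in \mathbb{Z}$): (Ax) infer $A \cup B \Rightarrow A$; (Cut) from $A \Rightarrow B$ and $B \cup C \Rightarrow D$ infer $A \cup C \Rightarrow D$; (Shf) from $A \Rightarrow B$ infer $A+i \Rightarrow B+i$. $\Sigma \vdash A \Rightarrow B$ means there is a finite sequence of formulas ending with $A \Rightarrow B$ in which each member is in $\Sigma$ or is the conclusion of one of these rules applied to earlier members. *)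

(* Defs.v *)
From HB Require Import structures.
From mathcomp Require Import all_boot all_order all_algebra.
From mathcomp Require Import finmap.
Set Implicit Arguments. Unset Strict Implicit. Unset Printing Implicit Defensive.
Import GRing.Theory.
Local Open Scope fset_scope.

(* Terms y^i are pairs (y, i) with y : Y and i : int. *)
Definition term (Y : finType) := (Y * int)%type.

Definition shiftset (Y : finType) (j : int) (M : {fset term Y}) : {fset term Y} :=
  [fset ((x.1, (x.2 + j)%R) : term Y) | x in M].

(* A formula A => B is a pair (A, B) of finite sets of terms. *)
Definition formula (Y : finType) := ({fset term Y} * {fset term Y})%type.

Definition theory (Y : finType) := formula Y -> Prop.

Definition ax_inst (Y : finType) (f : formula Y) : Prop :=
  exists A B : {fset term Y}, f = (A `|` B, A).

Definition cut_inst (Y : finType) (p1 p2 f : formula Y) : Prop :=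
  exists A B C D : {fset term Y},
    [/\ p1 = (A, B), p2 = (B `|` C, D) & f = (A `|` C, D)].

Definition shf_inst (Y : finType) (p f : formula Y) : Prop :=
  exists (A B : {fset term Y}) (i : int),
    p = (A, B) /\ f = (shiftset i A, shiftset i B).

Definition is_proof_seq (Y : finType) (Sigma : theory Y) (s : seq (formula Y)) : Prop :=
  forall k, (k < size s)%N ->
    let f := nth (fset0, fset0) s k in
    [\/ Sigma f,
        ax_inst f,
        (exists i j, [/\ (i < k)%N, (j < k)%N &
                       cut_inst (nth (fset0, fset0) s i) (nth (fset0, fset0) s j) f])
      | (exists i, (i < k)%N /\ shf_inst (nth (fset0, fset0) s i) f)].

Definition derives (Y : finType) (Sigma : theory Y) (f : formula Y) : Prop :=
  exists s : seq (formula Y), is_proof_seq Sigma s /\ s <> [::] /\ last (fset0, fset0) s = f.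

Definition add_formula (Y : finType) (Sigma : theory Y) (g : formula Y) : theory Y :=
  fun f => Sigma f \/ f = g.

(* Main.v *)
Require Import Defs.
From HB Require Import structures.
From mathcomp Require Import all_boot all_order all_algebra.
From mathcomp Require Import finmap.
Local Open Scope fset_scope.
Import GRing.Theory.

Section S.
Variable Y : finType.
Implicit Types (M X Z : {fset term Y}).

Lemma mem_shift (i : int) M (x : term Y) :
  (x \in shiftset i M) = ((x.1, (x.2 - i)%R) \in M).
Proof.
apply/imfsetP/idP => [[y yM ->]|xM] /=.
  by rewrite addrK -surjective_pairing.
exists (x.1, (x.2 - i)%R) => //=; by rewrite subrK -surjective_pairing. Qed.

Lemma shiftU i X Z : shiftset i (X `|` Z) = shiftset i X `|` shiftset i Z.
Proof. by apply/fsetP=> x; rewrite !(mem_shift, inE). Qed.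

Lemma shift0 i : shiftset i (fset0 : {fset term Y}) = fset0.
Proof. by apply/fsetP=> x; rewrite !(mem_shift, inE). Qed.

Lemma shiftid M : shiftset 0 M = M.
Proof. by apply/fsetP=> x; rewrite mem_shift subr0 -surjective_pairing. Qed.

Lemma shiftS i j M : shiftset i (shiftset j M) = shiftset (j + i)%R M.
Proof. by apply/fsetP=> x; rewrite !mem_shift /= (addrC j) opprD addrA. Qed.

Definition U (A : {fset term Y}) (s : seq int) := \big[fsetU/fset0]_(i <- s) shiftset i A.

Lemma U_cat A s1 s2 : U A (s1 ++ s2) = U A s1 `|` U A s2.
Proof. by rewrite /U big_cat. Qed.

Lemma U_shift A s i : shiftset i (U A s) = U A (map (fun j => (j + i)%R) s).
Proof.
elim: s => [|j s IH]; first by rewrite /U !big_nil shift0.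
by rewrite /U !big_cons -/(U A s) -/(U A _) shiftU IH shiftS.
Qed.

Variable Sigma : theory Y.

Inductive der : formula Y -> Prop :=
| dS f : Sigma f -> der f
| dA X Z : der (X `|` Z, X)
| dC P Q C D : der (P, Q) -> der (Q `|` C, D) -> der (P `|` C, D)
| dH P Q i : der (P, Q) -> der (shiftset i P, shiftset i Q).

Definition step (s : seq (formula Y)) (f : formula Y) :=
  [\/ Sigma f, ax_inst f,
        (exists i j, [/\ (i < size s)%N, (j < size s)%N &
                       cut_inst (nth (fset0, fset0) s i) (nth (fset0, fset0) s j) f])
      | (exists i, (i < size s)%N /\ shf_inst (nth (fset0, fset0) s i) f)].

Lemma proof_rcons s f :
  is_proof_seq Sigma (rcons s f) <-> is_proof_seq Sigma s /\ step s f.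
Proof.
split.
- move=> H; split.
  + move=> k ks; have := H k; rewrite size_rcons ltnS ltnW //.
    move=> /(_ isT); rewrite /= nth_rcons ks.
    case=> [h|h|[i [j [ik jk h]]]|[i [ik h]]]; [exact: Or41|exact: Or42| |].
    * apply: Or43; exists i, j; split => //; move: h.
      by rewrite !nth_rcons (ltn_trans ik ks) (ltn_trans jk ks).
    * apply: Or44; exists i; split => //; move: h.
      by rewrite !nth_rcons (ltn_trans ik ks).
  + have := H (size s); rewrite size_rcons ltnSn => /(_ isT) /=.
    rewrite nth_rcons ltnn eqxx.
    case=> [h|h|[i [j [ik jk h]]]|[i [ik h]]]; [exact: Or41|exact: Or42| |].
    * apply: Or43; exists i, j; split => //; move: h.
      by rewrite !nth_rcons ik jk.
    * apply: Or44; exists i; split => //; move: h.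
      by rewrite !nth_rcons ik.
- move=> [H Hs] k; rewrite size_rcons ltnS leq_eqVlt => /orP[/eqP ->|ks] /=.
  + rewrite nth_rcons ltnn eqxx.
    case: Hs => [h|h|[i [j [ik jk h]]]|[i [ik h]]]; [exact: Or41|exact: Or42| |].
    * apply: Or43; exists i, j; split => //.
      by rewrite !nth_rcons ik jk.
    * apply: Or44; exists i; split => //.
      by rewrite !nth_rcons ik.
  + have := H k ks; rewrite /= nth_rcons ks.
    case=> [h|h|[i [j [ik jk h]]]|[i [ik h]]]; [exact: Or41|exact: Or42| |].
    * apply: Or43; exists i, j; split => //.
      by rewrite !nth_rcons (ltn_trans ik ks) (ltn_trans jk ks).
    * apply: Or44; exists i; split => //.
      by rewrite !nth_rcons (ltn_trans ik ks).
Qed.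

Lemma proof_cat s1 s2 :
  is_proof_seq Sigma s1 -> is_proof_seq Sigma s2 -> is_proof_seq Sigma (s1 ++ s2).
Proof.
move=> H1; elim/last_ind: s2 => [|s2 x IH]; first by rewrite cats0.
rewrite -rcons_cat => /proof_rcons [H2 Hx]; apply/proof_rcons; split; first exact: IH.
case: Hx => [h|h|[i [j [ik jk h]]]|[i [ik h]]]; [exact: Or41|exact: Or42| |].
- apply: Or43; exists (size s1 + i)%N, (size s1 + j)%N.
  by rewrite size_cat !ltn_add2l !nth_cat !ltnNge !leq_addr /= !addKn -!ltnNge.
- apply: Or44; exists (size s1 + i)%N.
  by rewrite size_cat !ltn_add2l !nth_cat !ltnNge !leq_addr /= !addKn -!ltnNge.
Qed.

Lemma seq_der s : is_proof_seq Sigma s -> forall k, (k < size s)%N ->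
  der (nth (fset0, fset0) s k).
Proof.
elim/last_ind: s => [|s x IH] //= /proof_rcons [Hs Hx] k.
rewrite size_rcons ltnS leq_eqVlt => /orP[/eqP ->|ks].
- rewrite nth_rcons ltnn eqxx.
  case: Hx => [h|[X [Z ->]]|[i [j [ik jk [P [Q [C [D [e1 e2 ->]]]]]]]]|[i [ik [P [Q [n [e1 ->]]]]]]].
  + exact: dS.
  + exact: dA.
  + apply: (@dC _ Q); [rewrite -e1|rewrite -e2]; exact: IH.
  + apply: dH; rewrite -e1; exact: IH.
- rewrite nth_rcons ks; exact: IH.
Qed.

Lemma derivesP f : derives Sigma f <-> der f.
Proof.
split.
- move=> [s [Hs [sn <-]]]; rewrite -nth_last; apply: seq_der => //.
  by case: s sn {Hs}.
- elim => {f}.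
  + move=> f h; exists [:: f]; split => //; apply/(proof_rcons [::]); split => //.
    exact: Or41.
  + move=> X Z; exists [:: (X `|` Z, X)]; split => //; apply/(proof_rcons [::]); split => //.
    by apply: Or42; exists X, Z.
  + move=> P Q C D _ [s1 [H1 [n1 l1]]] _ [s2 [H2 [n2 l2]]].
    exists (rcons (s1 ++ s2) (P `|` C, D)); split; last by rewrite last_rcons; case: (s1++s2).
    apply/proof_rcons; split; first exact: proof_cat.
    apply: Or43; exists (size s1).-1, (size s1 + (size s2).-1)%N.
    have p1 : (0 < size s1)%N by case: s1 n1 {H1 l1}.
    have p2 : (0 < size s2)%N by case: s2 n2 {H2 l2}.
    have e1 : nth (fset0, fset0) (s1 ++ s2) (size s1).-1 = (P, Q).
      by rewrite nth_cat ltn_predL p1 nth_last.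
    have e2 : nth (fset0, fset0) (s1 ++ s2) (size s1 + (size s2).-1)%N = (Q `|` C, D).
      by rewrite nth_cat ltnNge leq_addr /= addKn nth_last.
    rewrite e1 e2 size_cat; split.
    - by rewrite ltn_addr // prednK.
    - by rewrite ltn_add2l prednK.
    - by exists P, Q, C, D.
  + move=> P Q i _ [s1 [H1 [n1 l1]]].
    exists (rcons s1 (shiftset i P, shiftset i Q)); split; last by rewrite last_rcons; case: s1 n1 {H1 l1}.
    apply/proof_rcons; split => //; apply: Or44; exists (size s1).-1.
    case: s1 n1 H1 l1 => // a1 s1 _ _ l1; rewrite nth_last l1; split => //.
    by exists P, Q, i.
Qed.


End S.
Arguments der {Y}.
Arguments dS {Y Sigma}.
Arguments dA {Y Sigma}.
Arguments dC {Y Sigma P Q C D}.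
Arguments dH {Y Sigma P Q}.
Arguments U {Y}.
Arguments shift0 {Y}.
Arguments derivesP {Y}.

Lemma der_mono (Y : finType) (Sigma : theory Y) (g : formula Y) f : der Sigma f -> der (add_formula Sigma g) f.
Proof.
elim => {f} [f h|X Z|P Q C D _ h1 _ h2|P Q i _ h]; [apply: dS; by left|exact: dA| |exact: dH].
exact: dC h1 h2.
Qed.

Lemma der_comb (Y : finType) (S : theory Y) X Z :
  der S (fset0, X) -> der S (fset0, Z) -> der S (fset0, X `|` Z).
Proof.
move=> hX hZ.
have h1 : der S (X `|` Z, X `|` Z) by rewrite -{1}[X `|` Z]fsetU0; apply: dA.
have h2 := dC hX h1; rewrite fset0U -{1}[Z]fsetU0 in h2.
by have := dC hZ h2; rewrite fsetU0.
Qed.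

Lemma der_sound (Y : finType) (Sigma : theory Y) (A : {fset term Y}) f : der (add_formula Sigma (fset0, A)) f ->
  exists s, der Sigma (f.1 `|` U A s, f.2).
Proof.
elim => {f}.
- move=> f [h|->].
  + by exists [::]; rewrite /U big_nil fsetU0 -surjective_pairing; apply: dS.
  + exists [:: 0%R]; rewrite /U big_cons big_nil shiftid fsetU0 fset0U /=.
    by rewrite -{1}[A]fsetU0; apply: dA.
- move=> X Z; exists [::]; rewrite /U big_nil fsetU0; exact: dA.
- move=> P Q C D _ [s1 h1] _ [s2 h2]; exists (s1 ++ s2) => /=.
  simpl in h1, h2.
  rewrite -fsetUA in h2.
  have := dC h1 h2.
  have -> : P `|` U A s1 `|` (C `|` U A s2) = P `|` C `|` U A (s1 ++ s2).
    by apply/fsetP => x; rewrite U_cat !inE; do ![case: (x \in _)].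
  by [].
- move=> P Q i _ [s h]; exists (map (fun j => (j + i)%R) s) => /=.
  by have := dH i h; rewrite shiftU U_shift.
Qed.

Theorem theorem11 (Y : finType) (HY : (0 < #|Y|)%N) (Sigma : theory Y)
    (A B : {fset term Y}) :
  derives (add_formula Sigma (fset0, A)) (fset0, B) <->
  exists s : seq int,
    derives Sigma ((\big[fsetU/fset0]_(i <- s) shiftset i A), B).
Proof.
rewrite derivesP; split.
- move=> /der_sound [s h]; exists s; apply/derivesP; move: h => /=.
  by rewrite fset0U.
- move=> [s /derivesP h].
  have hU : der (add_formula Sigma (fset0, A)) (fset0, U A s).
    elim: s {h} => [|i s IH].
      by rewrite /U big_nil; have := @dA _ (add_formula Sigma (fset0, A)) fset0 fset0; rewrite fsetU0.
    rewrite /U big_cons; apply: der_comb => //.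
    have h0 : der (add_formula Sigma (fset0, A)) (fset0, A) by apply: dS; right.
    by have := dH i h0; rewrite shift0.
  have h' : der (add_formula Sigma (fset0, A)) (U A s `|` fset0, B).
    by rewrite fsetU0; exact: der_mono.
  by have := dC hU h'; rewrite fsetU0.
Qed.
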